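(* Define $g(n)$ for $n\ge1$ greedily: $g(n)$ is the least positive integer such that $g(n)\notin\{g(1),\dots,g(n-1)\}$ and $g(n)-n\notin\{g(i)-i: 1\le i\le n-1\}$. Then $g(n)=f(n)$ for all $n\ge 1$. (Equivalently, $(f(n))_{n\ge1}$ is the lexicographically least sequence of distinct positive integers such that the integers $f(n)-n$, $n\ge1$, are pairwise distinct.)
   Context: $\mathbb{N}=\{0,1,2,\dots\}$. The sequence $f:\mathbb{N}\to\mathbb{N}$ is defined greedily: $f(0)=0$, and for $n\ge1$, $f(n)$ is the least natural number such that (i) $f(n)\notin\{f(0),f(1),\dots,f(n-1)\}$ and (ii) $\sum_{1\le i\le n} f(i)$ is divisible by $n$. *)

(* Defs.v *)
From mathcomp Require Import all_boot all_order all_algebra.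
Set Implicit Arguments. Unset Strict Implicit. Unset Printing Implicit Defensive.
Import Order.TTheory GRing.Theory Num.Theory.

(* is_f f : f is the greedy sequence of the paper:
   f 0 = 0, and for n >= 1, f n is the least natural number that is
   different from f 0, ..., f (n-1) and makes n divide f 1 + ... + f n. *)
Definition is_f (f : nat -> nat) : Prop :=
  f 0 = 0 /\
  forall n, 1 <= n ->
    [/\ (forall i, i < n -> f i <> f n),
        n %| \sum_(1 <= i < n.+1) f i
      & forall m, m < f n ->
          (exists2 i, i < n & f i = m) \/ ~~ (n %| \sum_(1 <= i < n) f i + m)].

(* is_g g : g is the greedy sequence g(1), g(2), ... (g 0 is irrelevant):
   for n >= 1, g n is the least positive integer different from
   g 1, ..., g (n-1) such that g n - n (an integer) differs from all
   g i - i, 1 <= i <= n-1. *)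
Definition is_g (g : nat -> nat) : Prop :=
  forall n, 1 <= n ->
    [/\ 0 < g n,
        (forall i, 1 <= i < n -> g i <> g n),
        (forall i, 1 <= i < n -> ((g i)%:Z - i%:Z <> (g n)%:Z - n%:Z)%R)
      & forall m, 0 < m < g n ->
          (exists2 i, 1 <= i < n & g i = m) \/
          (exists2 i, 1 <= i < n & ((g i)%:Z - i%:Z = m%:Z - n%:Z)%R)].

(* Main.v *)
Require Import Defs.
From mathcomp Require Import all_boot all_order all_algebra.
From mathcomp Require Import zify.

Fixpoint st (n : nat) : nat * (nat -> nat) :=
  if n is k.+1 then
    let: (a, h) := st k in
    if has (fun i => h i == a) (iota 0 k.+1)
    then (a.+1, fun i => if i == k.+1 then a + k.+1 else h i)
    else (a, fun i => if i == k.+1 then a else h i)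
  else (0, fun _ => 0).

Definition A n := (st n).1.
Definition H n := (st n).2 n.

Lemma stS n i : i != n.+1 -> (st n.+1).2 i = (st n).2 i.
Proof.
move=> ne /=; case: (st n) => a h /=.
by case: ifP => _ /=; rewrite (negbTE ne).
Qed.

Lemma stH n i : i <= n -> (st n).2 i = H i.
Proof.
elim: n => [|n IH] hi; first by move: hi; rewrite leqn0 => /eqP ->.
case: (eqVneq i n.+1) => [->//|ne].
rewrite stS // IH //. lia.
Qed.

Definition U n := has (fun i => H i == A n) (iota 0 n.+1).

Lemma stepS n :
  A n.+1 = (if U n then (A n).+1 else A n) /\
  H n.+1 = (if U n then A n + n.+1 else A n).
Proof.
rewrite /A /H /U.
have E : has (fun i => (st n).2 i == (st n).1) (iota 0 n.+1) =
         has (fun i => H i == (st n).1) (iota 0 n.+1).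
  apply: eq_in_has => i; rewrite mem_iota => hi; rewrite stH //; lia.
rewrite -E /=. case: (st n) => a h /=.
by case: ifP => _ /=; rewrite eqxx.
Qed.

Lemma AS n : A n.+1 = (if U n then (A n).+1 else A n).
Proof. by case: (stepS n). Qed.
Lemma HS n : H n.+1 = (if U n then A n + n.+1 else A n).
Proof. by case: (stepS n). Qed.
Lemma A0 : A 0 = 0. Proof. by []. Qed.
Lemma H0 : H 0 = 0. Proof. by []. Qed.

Lemma UP n : U n -> exists2 i, i <= n & H i = A n.
Proof. by move/hasP=> [i]; rewrite mem_iota => hi /eqP e; exists i => //; lia. Qed.
Lemma UN n : ~~ U n -> forall i, i <= n -> H i <> A n.
Proof.
move=> /hasPn hn i hi e. have := hn i. rewrite mem_iota e eqxx. move=> h; have:= h ltac:(lia). by [].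
Qed.

Lemma A_le n : A n <= n.
Proof. elim: n => // n IH; rewrite AS; case: U; lia. Qed.

Lemma A_mono i j : i <= j -> A i <= A j.
Proof.
move=> hij; rewrite -(subnKC hij); elim: (j - i) => [|d IH]; first by rewrite addn0.
rewrite addnS AS; case: U; lia.
Qed.

Definition S n := n - A n.

Lemma S_mono i j : i <= j -> S i <= S j.
Proof.
move=> hij; rewrite -(subnKC hij); elim: (j - i) => [|d IH]; first by rewrite addn0.
rewrite addnS /S AS. have := A_le (i + d). move: IH; rewrite /S. case: U; lia.
Qed.

Lemma H_bound n i : i <= n -> H i <= A n + n.
Proof.
elim: n => [|n IH] hi; first by move: hi; rewrite leqn0 => /eqP ->.
case: (eqVneq i n.+1) => [->|ne].
  rewrite HS AS; case: U; lia.
have := IH ltac:(lia). rewrite AS; case: U; lia.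
Qed.

Lemma sumH n : \sum_(1 <= i < n.+1) H i = n * A n.
Proof.
elim: n => [|n IH]; first by rewrite big_geq.
rewrite big_nat_recr //= IH HS AS; case: U; lia.
Qed.

Lemma H_distinct n i : i < n.+1 -> H i <> H n.+1.
Proof.
move=> hi. rewrite HS. case hU: (U n).
  have := @H_bound n i hi. lia.
by apply: UN; rewrite ?hU //; lia.
Qed.

Lemma diff_big j : 1 <= j -> U j.-1 -> H j = A j.-1 + j.
Proof. by case: j => // j _ hu; rewrite HS hu. Qed.
Lemma diff_small j : 1 <= j -> ~~ U j.-1 -> H j + S j = j.
Proof.
case: j => // j _ /= /negbTE hu; rewrite /S HS AS hu; have := A_le j; lia.
Qed.

Lemma S_step j : 1 <= j -> ~~ U j.-1 -> S j = (S j.-1).+1.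
Proof. case: j => // j _ /= /negbTE hu; rewrite /S AS hu /=; have := A_le j; lia. Qed.
Lemma A_step j : 1 <= j -> U j.-1 -> A j = (A j.-1).+1.
Proof. by case: j => // j _ hu; rewrite AS hu. Qed.

Lemma diff_distinct i j : 1 <= i < j -> H i + j <> H j + i.
Proof.
move=> /andP [h1 h2].
have hj1 : 1 <= j by lia.
have hij : i <= j.-1 by lia.
have hAm := @A_mono _ _ hij. have hSm := @S_mono _ _ hij.
have hAi := A_le i.-1. have hAj := A_le j.-1.
have hAi' := A_le i. have hAj' := A_le j.
case hi: (U i.-1); case hj: (U j.-1).
- rewrite ( @diff_big _ h1 hi) (@diff_big _ hj1 hj).
  have :=  @A_step _ h1 hi. lia.
- have := @diff_small _ hj1 (negbT hj). rewrite ( @diff_big _ h1 hi).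
  have := @S_step _ hj1 (negbT hj). rewrite /S. lia.
- have :=  @diff_small _ h1 (negbT hi). rewrite (@diff_big _ hj1 hj).
  have := @S_step _ h1 (negbT hi). rewrite /S. lia.
- have :=  @diff_small _ h1 (negbT hi). have := @diff_small _ hj1 (negbT hj).
  have := @S_step _ hj1 (negbT hj). lia.
Qed.

Lemma L1 n v : v < A n -> exists2 i, i <= n & H i = v.
Proof.
elim: n v => [|n IH] v; first by [].
rewrite AS; case hU: (U n) => hv.
  case: (ltngtP v (A n)) => [lt|gt|->].
  - by case: (IH v lt) => i hi e; exists i => //; lia.
  - lia.
  - by case: (@UP _ hU) => i hi e; exists i => //; lia.
by case: (IH v hv) => i hi e; exists i => //; lia.
Qed.

Lemma L3 n v : v < A n -> exists2 i, 1 <= i <= n & H i = v + i.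
Proof.
elim: n v => [|n IH] v; first by [].
rewrite AS; case hU: (U n) => hv.
  case: (ltngtP v (A n)) => [lt|gt|->].
  - by case: (IH v lt) => i hi e; exists i => //; lia.
  - lia.
  - by exists n.+1; rewrite ?HS ?hU //; lia.
by case: (IH v hv) => i hi e; exists i => //; lia.
Qed.

Lemma L2 n j : 1 <= j <= S n -> exists2 i, 1 <= i <= n & H i + j = i.
Proof.
elim: n j => [|n IH] j; first by rewrite /S A0; lia.
case hU: (U n) => hj.
  have : S n.+1 = S n by rewrite /S AS hU; have := A_le n; lia.
  move=> e; rewrite e in hj.
  by case: (IH j hj) => i hi e'; exists i => //; lia.
have hs := @S_step n.+1 isT (negbT hU).
have hd := @diff_small n.+1 isT (negbT hU).
simpl in hs, hd.
case: (ltngtP j (S n.+1)) => [lt|gt|->].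
- by case: (IH j ltac:(lia)) => i hi e'; exists i => //; lia.
- lia.
- by exists n.+1 => //; lia.
Qed.

Lemma nodiv1 k a m q : m < a -> a <= k -> k*a + m = q*(k+1) -> False.
Proof. move=> h1 h2 h3. case: (leqP a q) => hq.
  have := leq_mul hq (leqnn (k+1)). lia.
  have : q*(k+1) <= a.-1*(k+1) by apply: leq_mul; lia. nia. Qed.
Lemma nodiv2 k a m q : a < m -> m < a + k.+1 -> k*a + m = q*(k+1) -> False.
Proof. move=> h1 h2 h3. case: (leqP (a.+1) q) => hq.
  have := leq_mul hq (leqnn (k+1)). lia.
  have : q*(k+1) <= a*(k+1) by apply: leq_mul; lia. nia. Qed.

Lemma isfH : is_f H.
Proof.
split => // [[|k]] // _; split.
- by move=> i hi; apply: H_distinct.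
- by rewrite sumH dvdn_mulr.
move=> m hm. rewrite sumH.
have hAk := A_le k.
move: hm; rewrite HS; case hU: (U k) => hm.
  case: (ltngtP m (A k)) => [lt|gt|->].
  - right; apply/negP => /dvdnP [q hq]; apply: (@nodiv1 k (A k) m q) => //; lia.
  - right; apply/negP => /dvdnP [q hq]; apply: (@nodiv2 k (A k) m q) => //; lia.
  - by case: (@UP _ hU) => i hi e; left; exists i.
right; apply/negP => /dvdnP [q hq]; apply: (@nodiv1 k (A k) m q) => //; lia.
Qed.

Lemma isgH : is_g H.
Proof.
move=> [|k] // _.
have hAk := A_le k.
split.
- rewrite HS; case hU: (U k); first lia.
  rewrite lt0n; apply/eqP => e.
  by apply: (@UN k (negbT hU) 0 isT); rewrite H0 e.
- by move=> i /andP [_ hi]; apply: H_distinct.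
- move=> i hi e; apply: (@diff_distinct i k.+1) => //; lia.
move=> m /andP [m0 hm].
move: hm; rewrite HS; case hU: (U k) => hm.
  case: (ltngtP m (A k)) => [lt|gt|e].
  - case: (@L1 _ _ lt) => i hi e0.
    have : i != 0 by move: e0 {hi}; case: i => //; rewrite H0; lia.
    move=> ?; left; exists i; lia.
  - case: (leqP k.+1 m) => hmk.
      case: (@L3 k (m - k.+1) ltac:(lia)) => i hi e; right; exists i => //; lia.
    case: (@L2 k (k.+1 - m) ltac:(rewrite /S; lia)) => i hi e; right; exists i => //; lia.
  - case: (@UP _ hU) => i hi e'.
    have : i != 0 by move: e' {hi}; case: i => //; rewrite H0; lia.
    move=> ?; left; exists i; lia.
case: (@L1 _ _ hm) => i hi e0.
have : i != 0 by move: e0 {hi}; case: i => //; rewrite H0; lia.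
move=> ?; left; exists i; lia.
Qed.

Lemma fstep f1 f2 n : is_f f1 -> is_f f2 -> 1 <= n ->
  (forall i, i < n -> f1 i = f2 i) -> ~ f1 n < f2 n.
Proof.
move=> [_ h1] [_ h2] n1 pre lt.
case: (h1 n n1) => d1 s1 _; case: (h2 n n1) => _ _ m2.
have es : \sum_(1 <= i < n) f2 i = \sum_(1 <= i < n) f1 i.
  by apply: eq_big_nat => i /andP [_ hi]; rewrite pre.
case: (m2 _ lt) => [[i hi e]|].
  by apply: (d1 i hi); rewrite pre.
by rewrite es -big_nat_recr //= s1.
Qed.

Lemma f_uniq f1 f2 : is_f f1 -> is_f f2 -> forall n, f1 n = f2 n.
Proof.
move=> hf1 hf2 n; elim/ltn_ind: n => [[|n]] IH.
  by rewrite hf1.1 hf2.1.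
have a := @fstep f1 f2 n.+1 hf1 hf2 isT IH.
have b := @fstep f2 f1 n.+1 hf2 hf1 isT (fun i hi => esym (IH i hi)).
lia.
Qed.

Lemma gstep g1 g2 n : is_g g1 -> is_g g2 -> 1 <= n ->
  (forall i, 1 <= i < n -> g1 i = g2 i) -> ~ g1 n < g2 n.
Proof.
move=> h1 h2 n1 pre lt.
case: (h1 n n1) => p1 d1 e1 _; case: (h2 n n1) => _ _ _ m2.
case: (m2 (g1 n) ltac:(lia)) => [[i hi e]|[i hi e]].
  by apply: (d1 i hi); rewrite pre.
by apply: (e1 i hi); rewrite pre.
Qed.

Lemma g_uniq g1 g2 : is_g g1 -> is_g g2 -> forall n, 1 <= n -> g1 n = g2 n.
Proof.
move=> hg1 hg2 n; elim/ltn_ind: n => n IH n1.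
have pre : forall i, 1 <= i < n -> g1 i = g2 i.
  by move=> i /andP [a b]; apply: IH.
have a := @gstep g1 g2 n hg1 hg2 n1 pre.
have b := @gstep g2 g1 n hg2 hg1 n1 (fun i hi => esym (pre i hi)).
lia.
Qed.

Theorem mainTheorem3 :
  (exists f, is_f f) /\ (exists g, is_g g) /\
  (forall f g : nat -> nat, is_f f -> is_g g -> forall n, 1 <= n -> g n = f n).
Proof.
split; first by exists H; exact: isfH.
split; first by exists H; exact: isgH.
move=> f g hf hg n n1.
by rewrite (@g_uniq g H hg isgH n n1) (@f_uniq f H hf isfH n).
Qed.
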